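(* Given any pair $\mathbf v=(v_1,v_2)$ with $1\ge v_1>v_2\ge 0$, there is one and only one real cubic polynomial $f$ with $f(0)=0$ and $f(1)=1$ which has two critical points $c_1<c_2$ in the open interval $(0,1)$ with critical values $f(c_1)=v_1$ and $f(c_2)=v_2$. *)

(* Defs.v *)
From HB Require Import structures.
From mathcomp Require Import all_boot all_order all_algebra.
From mathcomp Require Import reals.
Set Implicit Arguments.
Unset Strict Implicit.
Unset Printing Implicit Defensive.

(* Main.v *)
Require Import Defs.
From HB Require Import structures.
From mathcomp Require Import all_boot all_order all_algebra.
From mathcomp Require Import reals.
From mathcomp Require Import ring lra.
Import Order.TTheory GRing.Theory Num.Theory.
Local Open Scope ring_scope.

Section S.
Variable R : realType.

Lemma horner4 (f : {poly R}) x : (size f <= 4)%N ->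
  f.[x] = f`_0 + f`_1 * x + f`_2 * x^+2 + f`_3 * x^+3.
Proof.
move=> h; rewrite (horner_coef_wide x h) !big_ord_recr big_ord0 /=.
by rewrite expr0 expr1 mulr1 add0r.
Qed.

Lemma hornerd4 (f : {poly R}) x : (size f <= 4)%N ->
  f^`().[x] = f`_1 + 2 * f`_2 * x + 3 * f`_3 * x^+2.
Proof.
move=> h.
have h' : (size f^`() <= 4)%N.
  apply: leq_trans h; case: (eqVneq f 0) => [->|nz]; first by rewrite deriv0.
  exact: ltnW (lt_size_deriv nz).
rewrite horner4 // !coef_deriv.
have -> : f`_4 = 0 by apply: nth_default.
rewrite mul0rn mul0r addr0 -!(mulr_natl (f`_ _)); ring.
Qed.

Definition P (x : R) := 3 * x ^+ 2 - 2 * x ^+ 3.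

Lemma P_inj_gt1 u u' : 1 < u -> 1 < u' -> P u = P u' -> u = u'.
Proof.
move=> hu hu' e; apply/eqP; rewrite -subr_eq0.
have: (u - u') * (3 * (u + u') - 2 * (u ^+ 2 + u * u' + u' ^+ 2)) == 0.
  by apply/eqP; rewrite -[RHS](subrr (P u)) {2}e /P; ring.
rewrite mulf_eq0 => /orP [//|/eqP h]; exfalso.
have h1 : u < u ^+ 2 by rewrite expr2 -{1}(mulr1 u) ltr_pM2l //; lra.
have h2 : u' < u' ^+ 2 by rewrite expr2 -{1}(mulr1 u') ltr_pM2l //; lra.
have h3 : u + u' < 2 * (u * u') by nra.
lra.
Qed.

Lemma P_inj_lt0 u u' : u < 0 -> u' < 0 -> P u = P u' -> u = u'.
Proof.
move=> hu hu' e; apply/eqP; rewrite -subr_eq0.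
have: (u - u') * (3 * (u + u') - 2 * (u ^+ 2 + u * u' + u' ^+ 2)) == 0.
  by apply/eqP; rewrite -[RHS](subrr (P u)) {2}e /P; ring.
rewrite mulf_eq0 => /orP [//|/eqP h]; exfalso.
have h1 : 0 < u ^+ 2 by rewrite expr2; nra.
have h2 : 0 < u' ^+ 2 by rewrite expr2; nra.
have h3 : 0 < u * u' by nra.
lra.
Qed.

Lemma param (v1 v2 A B C c1 c2 : R) :
  0 <= v2 -> v2 < v1 -> 0 < c1 -> c1 < c2 -> c2 < 1 ->
  C + B + A = 1 ->
  C + 2 * B * c1 + 3 * A * c1 ^+ 2 = 0 ->
  C + 2 * B * c2 + 3 * A * c2 ^+ 2 = 0 ->
  C * c1 + B * c1 ^+ 2 + A * c1 ^+ 3 = v1 ->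
  C * c2 + B * c2 ^+ 2 + A * c2 ^+ 3 = v2 ->
  [/\ 1 < c2 / (c2 - c1), (c2 - 1) / (c2 - c1) < 0,
   (v1 - v2) * P (c2 / (c2 - c1)) = - v2,
   (v1 - v2) * P ((c2 - 1) / (c2 - c1)) = 1 - v2 &
   let u := c2 / (c2 - c1) in let w := (c2 - 1) / (c2 - c1) in
   [/\ c2 = u / (u - w), c1 = (u - 1) / (u - w), A = 2 * (v1 - v2) * (u - w) ^+ 3,
       B = - (3 * A * (c1 + c2)) / 2 & C = 3 * A * c1 * c2]].
Proof.
move=> hv2 hv12 hc1 hc12 hc2 E1 E2 E3 E4 E5.
have dpos : 0 < c2 - c1 by rewrite subr_gt0.
have dn0 : c2 - c1 != 0 by rewrite gt_eqF.
have c12 : c1 - c2 != 0 by rewrite subr_eq0 lt_eqF.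
have hB0 : 3 * A * (c1 + c2) + 2 * B = 0.
  have : (c1 - c2) * (3 * A * (c1 + c2) + 2 * B) == 0.
    apply/eqP; rewrite -[RHS](subrr 0) -{1}E2 -E3; ring.
  by rewrite mulf_eq0 (negbTE c12) => /eqP.
have hB : B = - (3 * A * (c1 + c2)) / 2.
  have -> : B = ((3 * A * (c1 + c2) + 2 * B) - 3 * A * (c1 + c2)) / 2 by field.
  by rewrite hB0; field.
have hC : C = 3 * A * c1 * c2.
  have -> : C = (C + 2 * B * c1 + 3 * A * c1 ^+ 2) - 2 * B * c1 - 3 * A * c1 ^+ 2 by ring.
  by rewrite E2 hB; field.
have hv1 : v1 = A * c1 ^+ 2 * (3 * c2 - c1) / 2.
  by rewrite -E4 hB hC; field.
have hv2' : v2 = A * c2 ^+ 2 * (3 * c1 - c2) / 2.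
  by rewrite -E5 hB hC; field.
have hK : v1 - v2 = A * (c2 - c1) ^+ 3 / 2.
  by rewrite hv1 hv2'; field.
have huw : c2 / (c2 - c1) - (c2 - 1) / (c2 - c1) = (c2 - c1)^-1.
  by field.
split.
- by rewrite ltr_pdivlMr // mul1r; lra.
- by rewrite ltr_pdivrMr // mul0r; lra.
- by rewrite hK hv2' /P; field.
- apply: (@addIr _ v2); rewrite subrK; apply: (etrans _ E1).
  by rewrite hK hv2' hB hC /P; field.
rewrite /= huw; split.
- by field.
- by field.
- by rewrite hK; field.
- exact: hB.
- exact: hC.
Qed.

Definition Q (t : R) : {poly R} := Poly [:: t; 0; -3; 2].

Lemma P_ivt t a b : a <= b -> t - P a <= 0 -> 0 <= t - P b ->
  exists2 x, a <= x <= b & P x = t.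
Proof.
move=> hab ha hb.
have hs : (size (Q t) <= 4)%N by apply: size_Poly.
have ev : forall y, (Q t).[y] = t - P y.
  by move=> y; rewrite horner4 // /Q !coef_Poly /= /P; ring.
have := @poly_ivt R (Q t) a b hab; rewrite !ev ha hb => /(_ isT) [x hx].
rewrite /root ev subr_eq0 => /eqP e.
by exists x.
Qed.

Lemma root_u t : t <= 0 -> exists u, 1 < u /\ P u = t.
Proof.
move=> ht.
have hb : 0 <= t - P (2 - t).
  rewrite /P; have -> : t - (3 * (2 - t) ^+ 2 - 2 * (2 - t) ^+ 3) =
     ((2 - t) - 2) * (2 * (2 - t) ^+ 2 + (2 - t) + 1) + 4 by ring.
  have h0 : 0 <= (2 - t) - 2 by lra.
  have h1 : 0 <= 2 * (2 - t) ^+ 2 + (2 - t) + 1 by rewrite expr2; nra.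
  have := mulr_ge0 h0 h1; lra.
have ha : t - P 1 <= 0 by rewrite /P expr1n; lra.
have [x /andP [h1 h2] e] := @P_ivt t 1 (2 - t) ltac:(lra) ha hb.
exists x; split => //.
rewrite lt_neqAle h1 andbT; apply/negP => /eqP ex.
by move: e; rewrite -ex /P expr1n; lra.
Qed.

Lemma root_w t : 1 <= t -> exists w, w < 0 /\ P w = t.
Proof.
move=> ht.
have ha : t - P (- t) <= 0.
  rewrite /P; have -> : t - (3 * (- t) ^+ 2 - 2 * (- t) ^+ 3) =
     - (t * (3 * t - 1) + 2 * t ^+ 3) by ring.
  have h0 : 0 <= t * (3 * t - 1) by apply: mulr_ge0; lra.
  have h1 : 0 <= t ^+ 3 by apply: exprn_ge0; lra.
  lra.
have hb : 0 <= t - P 0 by rewrite /P expr0n /= expr0n /=; lra.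
have [x /andP [h1 h2] e] := @P_ivt t (- t) 0 ltac:(lra) ha hb.
exists x; split => //.
rewrite lt_neqAle h2 andbT; apply/negP => /eqP ex.
by move: e; rewrite ex /P expr0n /= expr0n /=; lra.
Qed.

Definition prop (v1 v2 : R) (f : {poly R}) :=
    size f = 4%N /\ f.[0] = 0 /\ f.[1] = 1 /\
    exists c1 c2 : R,
      0 < c1 /\ c1 < c2 /\ c2 < 1 /\
      root f^`() c1 /\ root f^`() c2 /\
      f.[c1] = v1 /\ f.[c2] = v2.

Lemma extract v1 v2 g : prop v1 v2 g -> exists c1 c2,
  [/\ 0 < c1, c1 < c2, c2 < 1, size g = 4%N & 
  [/\ g`_0 = 0, g`_1 + g`_2 + g`_3 = 1,
  g`_1 + 2 * g`_2 * c1 + 3 * g`_3 * c1 ^+ 2 = 0,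
  g`_1 + 2 * g`_2 * c2 + 3 * g`_3 * c2 ^+ 2 = 0 &
  g`_1 * c1 + g`_2 * c1 ^+ 2 + g`_3 * c1 ^+ 3 = v1 /\
  g`_1 * c2 + g`_2 * c2 ^+ 2 + g`_3 * c2 ^+ 3 = v2]].
Proof.
move=> [sg [h0 [h1 [c1 [c2 [hc1 [hc12 [hc2 [r1 [r2 [e1 e2]]]]]]]]]]].
have hs : (size g <= 4)%N by rewrite sg.
have g0 : g`_0 = 0 by apply: (etrans _ h0); rewrite horner4 //; ring.
exists c1, c2; split => //; split => //.
- by apply: (etrans _ h1); rewrite horner4 // g0; ring.
- by move: r1; rewrite /root hornerd4 // => /eqP.
- by move: r2; rewrite /root hornerd4 // => /eqP.
- split; first by apply: (etrans _ e1); rewrite horner4 // g0; ring.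
  by apply: (etrans _ e2); rewrite horner4 // g0; ring.
Qed.

Lemma uniq_prop v1 v2 g h : 0 <= v2 -> v2 < v1 ->
  prop v1 v2 g -> prop v1 v2 h -> g = h.
Proof.
move=> hv2 hv12 /extract [c1 [c2 [hc1 hc12 hc2 sg [g0 E1 E2 E3 [E4 E5]]]]].
move=> /extract [c1' [c2' [hc1' hc12' hc2' sh [h0 E1' E2' E3' [E4' E5']]]]].
have [hu hw Pu Pw /= [e2 e1 eA eB eC]] :=
  @param v1 v2 g`_3 g`_2 g`_1 c1 c2 hv2 hv12 hc1 hc12 hc2
    ltac:(by rewrite -E1; ring) E2 E3 E4 E5.
have [hu' hw' Pu' Pw' /= [e2' e1' eA' eB' eC']] :=
  @param v1 v2 h`_3 h`_2 h`_1 c1' c2' hv2 hv12 hc1' hc12' hc2'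
    ltac:(by rewrite -E1'; ring) E2' E3' E4' E5'.
have Kn0 : v1 - v2 != 0 by rewrite subr_eq0 gt_eqF.
have eu : c2 / (c2 - c1) = c2' / (c2' - c1').
  by apply: P_inj_gt1 => //; apply: (mulfI Kn0); rewrite Pu Pu'.
have ew : (c2 - 1) / (c2 - c1) = (c2' - 1) / (c2' - c1').
  by apply: P_inj_lt0 => //; apply: (mulfI Kn0); rewrite Pw Pw'.
have ec2 : c2 = c2' by rewrite e2 e2' eu ew.
have ec1 : c1 = c1' by rewrite e1 e1' eu ew.
have eA3 : g`_3 = h`_3 by rewrite eA eA' eu ew.
have eB2 : g`_2 = h`_2 by rewrite eB eB' eA3 ec1 ec2.
have eC1 : g`_1 = h`_1 by rewrite eC eC' eA3 ec1 ec2.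
apply/polyP => i; case: i => [|[|[|[|i]]]] //.
- by rewrite g0 h0.
- by rewrite !nth_default ?sg ?sh.
Qed.

Lemma exists_prop v1 v2 : 0 <= v2 -> v2 < v1 -> v1 <= 1 -> exists f, prop v1 v2 f.
Proof.
move=> hv2 hv12 hv1.
have Kpos : 0 < v1 - v2 by rewrite subr_gt0.
have Kn0 : v1 - v2 != 0 by rewrite gt_eqF.
have [u [hu Pu]] := @root_u (- v2 / (v1 - v2)) ltac:(rewrite mulNr oppr_le0; apply: divr_ge0; lra).
have [w [hw Pw]] := @root_w ((1 - v2) / (v1 - v2)) ltac:(rewrite ler_pdivlMr // mul1r; lra).
have Pu' : (v1 - v2) * P u = - v2 by rewrite Pu; field.
have Pw' : (v1 - v2) * P w = 1 - v2 by rewrite Pw; field.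
have uw : 0 < u - w by lra.
have uwn : u - w != 0 by rewrite gt_eqF.
pose c2 := u / (u - w).
pose c1 := (u - 1) / (u - w).
pose A := 2 * (v1 - v2) * (u - w) ^+ 3.
pose B := - (3 * A * (c1 + c2)) / 2.
pose C := 3 * A * c1 * c2.
have Apos : 0 < A by rewrite /A !mulr_gt0 // exprn_gt0.
have hc1 : 0 < c1 by rewrite /c1 divr_gt0 // subr_gt0.
have hc12 : c1 < c2.
  have -> : c2 = c1 + (u - w)^-1 by rewrite /c1 /c2; field.
  by rewrite ltrDl invr_gt0.
have hc2 : c2 < 1 by rewrite /c2 ltr_pdivrMr // mul1r; lra.
pose f := Poly [:: 0; C; B; A].
have hs : (size f <= 4)%N by apply: size_Poly.
have cf : forall x, f.[x] = C * x + B * x ^+ 2 + A * x ^+ 3.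
  by move=> x; rewrite horner4 // /f !coef_Poly /=; ring.
have cd : forall x, f^`().[x] = C + 2 * B * x + 3 * A * x ^+ 2.
  by move=> x; rewrite hornerd4 // /f !coef_Poly /=.
exists f; split.
  apply/eqP; rewrite eqn_leq hs /=; rewrite ltnNge; apply/negP => h.
  have := nth_default 0 h; rewrite /f coef_Poly /= => eA.
  by move: Apos; rewrite eA ltxx.
split; first by rewrite cf; ring.
split.
  rewrite cf; apply: (etrans _ (_ : - ((v1 - v2) * P u) + (v1 - v2) * P w = 1)).
    by rewrite /B /C /A /c1 /c2 /P; field.
  by rewrite Pu' Pw'; ring.
exists c1, c2; do 3 split => //.
split; first by rewrite /root cd /B /C; apply/eqP; field.
split; first by rewrite /root cd /B /C; apply/eqP; field.
split.
  rewrite cf; apply: (etrans _ (_ : (v1 - v2) - (v1 - v2) * P u = v1)).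
    by rewrite /B /C /A /c1 /c2 /P; field.
  by rewrite Pu'; ring.
rewrite cf; apply: (etrans _ (_ : - ((v1 - v2) * P u) = v2)).
  by rewrite /B /C /A /c1 /c2 /P; field.
by rewrite Pu' opprK.
Qed.
End S.

Theorem lemma1 (R : realType) (v1 v2 : R) (hv : 0 <= v2 /\ v2 < v1 /\ v1 <= 1) :
  exists! f : {poly R},
    size f = 4%N /\ f.[0] = 0 /\ f.[1] = 1 /\
    exists c1 c2 : R,
      0 < c1 /\ c1 < c2 /\ c2 < 1 /\
      root f^`() c1 /\ root f^`() c2 /\
      f.[c1] = v1 /\ f.[c2] = v2.
Proof.
case: hv => hv2 [hv12 hv1].
have [f hf] := @exists_prop R v1 v2 hv2 hv12 hv1.
exists f; split => // g hg.
exact: (@uniq_prop R v1 v2 f g hv2 hv12 hf hg).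
Qed.
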